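(* Let $(X,<)$ be a linearly ordered set. For all ultrafilters $u,v\in\beta X$: $$u\,\tilde<\,v \iff \mathrm{supp}(u)<\mathrm{supp}(v)\ \vee\ \mathrm{supp}(u)=\mathrm{supp}(v)=I_u=I_v,$$ $$u\,\tilde\le\,v \iff \mathrm{supp}(u)<\mathrm{supp}(v)\ \vee\ \mathrm{supp}(u)=\mathrm{supp}(v)=I_u=I_v\ \vee\ \exists x\in X\,(u=v=\tilde x),$$ $$u\,\tilde>\,v \iff \mathrm{supp}(u)>\mathrm{supp}(v)\ \vee\ \mathrm{supp}(u)=\mathrm{supp}(v)=J_u=J_v,$$ $$u\,\tilde\ge\,v \iff \mathrm{supp}(u)>\mathrm{supp}(v)\ \vee\ \mathrm{supp}(u)=\mathrm{supp}(v)=J_u=J_v\ \vee\ \exists x\in X\,(u=v=\tilde x).$$ Consequently, on non-principal ultrafilters, $\tilde<$ coincides with $\tilde\le$ and $\tilde>$ coincides with $\tilde\ge$.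
   Context: $(X,<)$ is a linear order, $\le$ its reflexive version, $>$ and $\ge$ the converse relations. $\beta X$ is the set of all ultrafilters over $X$; $\tilde x=\{S\subseteq X:x\in S\}$ for $x\in X$. For a binary relation $R$ on $X$, its ultrafilter extension $\tilde R$ on $\beta X$ is defined by $u\,\tilde R\,v\iff\{x\in X:\{y\in X:x\,R\,y\}\in v\}\in u$. Initial segments are downward closed subsets, final segments upward closed subsets. $I_u=\bigcap\{I\in u: I\text{ initial segment}\}$, $J_u=\bigcap\{J\in u: J\text{ final segment}\}$. For non-principal $u$ exactly one of $I_u\in u$, $J_u\in u$ holds. Supports: if $u=\tilde x$ then $\mathrm{supp}(u)=\{x\}$ (a ''point''); if $u$ is non-principal and $I_u\in u$ then $\mathrm{supp}(u)$ is $I_u$ regarded as a left half-cut (a nonempty initial segment with no greatest element); if $u$ is non-principal and $J_u\in u$ then $\mathrm{supp}(u)$ is $J_u$ regarded as a right half-cut (a nonempty final segment with no least element). Two supports are equal iff they are of the same kind (point/left/right) and equal as sets. The notation ''$\mathrm{supp}(u)=I_u$'' means ''$u$ is non-principal and $I_u\in u$'', and ''$\mathrm{supp}(u)=J_u$'' means ''$u$ is non-principal and $J_u\in u$''; thus $\mathrm{supp}(u)=\mathrm{supp}(v)=I_u=I_v$ means both are non-principal, $I_u\in u$, $I_v\in v$ and $I_u=I_v$ (similarly for $J$). The natural linear order on supports (points $\{x\}$, left half-cuts $I$, right half-cuts $J$): $\{x\}<\{y\}$ iff $x<y$; $\{x\}<I$ iff $x\in I$, and $I<\{x\}$ iff $x\notin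 I$; $\{x\}<J$ iff $x\notin J$, and $J<\{x\}$ iff $x\in J$; $I<I'$ iff $I\subsetneq I'$; $J<J'$ iff $J\supsetneq J'$; $I<J$ iff $I\cap J=\emptyset$, and $J<I$ iff $I\cap J\neq\emptyset$. Write $\le$ for its reflexive version. *)

(* Defs.v *)
From Stdlib Require Import Classical ClassicalEpsilon FunctionalExtensionality PropExtensionality.

Set Implicit Arguments.

Section Defs.
Variable X : Type.

Definition is_ultrafilter (u : (X -> Prop) -> Prop) : Prop :=
  u (fun _ => True) /\
  ~ u (fun _ => False) /\
  (forall S T : X -> Prop, u S -> (forall x, S x -> T x) -> u T) /\
  (forall S T : X -> Prop, u S -> u T -> u (fun x => S x /\ T x)) /\
  (forall S : X -> Prop, u S \/ u (fun x => ~ S x)).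

Definition tilde (x : X) : (X -> Prop) -> Prop := fun S => S x.

Definition principal (u : (X -> Prop) -> Prop) : Prop := exists x, u = tilde x.

(* ultrafilter extension of a binary relation *)
Definition ext (R : X -> X -> Prop) (u v : (X -> Prop) -> Prop) : Prop :=
  u (fun x => v (fun y => R x y)).

Variable lt : X -> X -> Prop.

Definition le (x y : X) : Prop := lt x y \/ x = y.
Definition gt (x y : X) : Prop := lt y x.
Definition ge (x y : X) : Prop := le y x.

Definition initial_segment (A : X -> Prop) : Prop :=
  forall a b, A b -> lt a b -> A a.
Definition final_segment (J : X -> Prop) : Prop :=
  forall a b, J a -> lt a b -> J b.

Definition Iu (u : (X -> Prop) -> Prop) : X -> Prop :=
  fun x => forall A, initial_segment A -> u A -> A x.
Definition Ju (u : (X -> Prop) -> Prop) : X -> Prop :=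
  fun x => forall J, final_segment J -> u J -> J x.

Inductive support : Type :=
| Pt : X -> support
| LeftCut : (X -> Prop) -> support
| RightCut : (X -> Prop) -> support.

Definition supp (u : (X -> Prop) -> Prop) : support :=
  match excluded_middle_informative (principal u) with
  | left H => Pt (proj1_sig (constructive_indefinite_description _ H))
  | right _ =>
      if excluded_middle_informative (u (Iu u)) then LeftCut (Iu u)
      else RightCut (Ju u)
  end.

Definition supp_lt (s t : support) : Prop :=
  match s, t with
  | Pt x, Pt y => lt x y
  | Pt x, LeftCut K => K x
  | LeftCut K, Pt x => ~ K x
  | Pt x, RightCut J => ~ J x
  | RightCut J, Pt x => J x
  | LeftCut K, LeftCut K' =>
      (forall z, K z -> K' z) /\ exists z, K' z /\ ~ K z
  | RightCut J, RightCut J' =>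
      (forall z, J' z -> J z) /\ exists z, J z /\ ~ J' z
  | LeftCut K, RightCut J => forall z, ~ (K z /\ J z)
  | RightCut J, LeftCut K => exists z, K z /\ J z
  end.

End Defs.

(* Main.v *)
Require Import Defs.
From Stdlib Require Import Classical ClassicalEpsilon FunctionalExtensionality PropExtensionality.

Definition linord {X : Type} (lt : X -> X -> Prop) :=
  (forall x, ~ lt x x) /\ (forall x y z, lt x y -> lt y z -> lt x z) /\
  (forall x y, lt x y \/ x = y \/ lt y x).

Lemma uf_mono {X} {u : (X->Prop)->Prop} : is_ultrafilter u ->
  forall S T : X -> Prop, u S -> (forall x, S x -> T x) -> u T.
Proof. intros (_&_&H&_); exact H. Qed.
Lemma uf_and {X} {u : (X->Prop)->Prop} : is_ultrafilter u ->
  forall S T : X -> Prop, u S -> u T -> u (fun x => S x /\ T x).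
Proof. intros (_&_&_&H&_); exact H. Qed.
Lemma uf_em {X} {u : (X->Prop)->Prop} : is_ultrafilter u ->
  forall S : X -> Prop, u S \/ u (fun x => ~ S x).
Proof. intros (_&_&_&_&H); exact H. Qed.
Lemma uf_ne {X} {u : (X->Prop)->Prop} : is_ultrafilter u ->
  forall S : X -> Prop, u S -> exists x, S x.
Proof. intros Hu S HS. apply NNPP; intro H. apply (proj1 (proj2 Hu)).
  apply (uf_mono Hu S _ HS). intros x Hx; apply H; eauto. Qed.
Lemma uf_ne2 {X} {u : (X->Prop)->Prop} : is_ultrafilter u ->
  forall S T : X -> Prop, u S -> u T -> exists x, S x /\ T x.
Proof. intros Hu S T HS HT. exact (uf_ne Hu _ (uf_and Hu _ _ HS HT)). Qed.
Lemma uf_single {X} {u : (X->Prop)->Prop} (x : X) : is_ultrafilter u ->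
  u (fun y => y = x) -> u = tilde x.
Proof. intros Hu H. extensionality S. apply propositional_extensionality. unfold tilde. split.
 - intro HS. destruct (uf_ne2 Hu _ _ HS H) as [y [Hy ->]]; auto.
 - intro HS. eapply uf_mono; eauto. intros y ->; auto. Qed.
Lemma nonpr_ne {X} {u : (X->Prop)->Prop} (x : X) : is_ultrafilter u -> ~ principal u ->
  u (fun y => y <> x).
Proof. intros Hu Hn. destruct (uf_em Hu (fun y => y = x)) as [H|H]; auto.
  exfalso; apply Hn; exists x; apply uf_single; auto. Qed.
Lemma tilde_inj {X} (a b : X) : tilde a = tilde b -> a = b.
Proof. intro H. assert (E : tilde b (fun y => y = a)) by (rewrite <- H; reflexivity).
  exact (eq_sym E). Qed.

Lemma I2 {X : Type} (lt : X -> X -> Prop) (Hl : linord lt) (u : (X -> Prop) -> Prop) (Hu : is_ultrafilter u) (Hn : ~ principal u) : forall x, Iu lt u x -> u (fun y => lt x y).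
Proof. try (pose proof Hl as [irr [trn tot]]). intros x Hx. destruct (uf_em Hu (fun y => lt x y)) as [H|H]; auto. exfalso.
  assert (B : u (fun y => lt y x)).
  { eapply uf_mono; [exact Hu| exact (uf_and Hu _ _ H (nonpr_ne x Hu Hn))|].
    intros y [H1 H2]. destruct (tot x y) as [?|[?|?]]; first [assumption|congruence|tauto]. }
  apply (irr x). apply (Hx (fun y => lt y x)); auto. intros a b Hb Hab. eauto. Qed.

Lemma I3 {X : Type} (lt : X -> X -> Prop) (Hl : linord lt) (u : (X -> Prop) -> Prop) (Hu : is_ultrafilter u) : forall x, ~ Iu lt u x -> u (fun y => lt y x).
Proof. try (pose proof Hl as [irr [trn tot]]). intros x Hx. unfold Iu in Hx. apply not_all_ex_not in Hx as [A HA].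
  apply imply_to_and in HA as [HA HA2]. apply imply_to_and in HA2 as [HuA HAx].
  eapply uf_mono; eauto. intros y Hy. destruct (tot y x) as [?|[?|?]]; auto.
  subst; contradiction. exfalso; apply HAx; eapply HA; eauto. Qed.

Lemma J2 {X : Type} (lt : X -> X -> Prop) (Hl : linord lt) (u : (X -> Prop) -> Prop) (Hu : is_ultrafilter u) (Hn : ~ principal u) : forall x, Ju lt u x -> u (fun y => lt y x).
Proof. try (pose proof Hl as [irr [trn tot]]). intros x Hx. destruct (uf_em Hu (fun y => lt y x)) as [H|H]; auto. exfalso.
  assert (B : u (fun y => lt x y)).
  { eapply uf_mono; [exact Hu| exact (uf_and Hu _ _ H (nonpr_ne x Hu Hn))|].
    intros y [H1 H2]. destruct (tot x y) as [?|[?|?]]; first [assumption|congruence|tauto]. }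
  apply (irr x). apply (Hx (fun y => lt x y)); auto. intros a b Hb Hab. eauto. Qed.

Lemma J3 {X : Type} (lt : X -> X -> Prop) (Hl : linord lt) (u : (X -> Prop) -> Prop) (Hu : is_ultrafilter u) : forall x, ~ Ju lt u x -> u (fun y => lt x y).
Proof. try (pose proof Hl as [irr [trn tot]]). intros x Hx. unfold Ju in Hx. apply not_all_ex_not in Hx as [A HA].
  apply imply_to_and in HA as [HA HA2]. apply imply_to_and in HA2 as [HuA HAx].
  eapply uf_mono; eauto. intros y Hy. destruct (tot y x) as [?|[?|?]]; auto.
  exfalso; apply HAx; eapply HA; eauto. subst; contradiction. Qed.

Lemma Iu_Ju {X : Type} (lt : X -> X -> Prop) (Hl : linord lt) (u : (X -> Prop) -> Prop) (Hu : is_ultrafilter u) (Hn : ~ principal u) : forall x, Ju lt u x <-> ~ Iu lt u x.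
Proof. try (pose proof Hl as [irr [trn tot]]). intro x; split.
 - intros HJ HI. destruct (uf_ne2 Hu _ _ (I2 lt Hl u Hu Hn x HI) (J2 lt Hl u Hu Hn x HJ)) as [y [H1 H2]]. first [exact (irr _ (trn _ _ _ H1 H2)) | exact (irr _ (trn _ _ _ H2 H1))].
 - intro HI. apply NNPP; intro HJ.
   destruct (uf_ne2 Hu _ _ (I3 lt Hl u Hu x HI) (J3 lt Hl u Hu x HJ)) as [y [H1 H2]]. first [exact (irr _ (trn _ _ _ H1 H2)) | exact (irr _ (trn _ _ _ H2 H1))]. Qed.

Lemma IJ {X : Type} (lt : X -> X -> Prop) (Hl : linord lt) (u : (X -> Prop) -> Prop) (Hu : is_ultrafilter u) (Hn : ~ principal u) : ~ u (Iu lt u) -> u (Ju lt u).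
Proof. try (pose proof Hl as [irr [trn tot]]). intro H. destruct (uf_em Hu (Ju lt u)) as [H1|H1]; auto. exfalso.
  destruct (uf_em Hu (Iu lt u)) as [H2|H2]; [tauto|].
  destruct (uf_ne2 Hu _ _ H1 H2) as [z [Hz1 Hz2]]. apply Hz1. apply (Iu_Ju lt Hl u Hu Hn); auto. Qed.

Lemma IJ_excl {X : Type} (lt : X -> X -> Prop) (Hl : linord lt) (u : (X -> Prop) -> Prop) (Hu : is_ultrafilter u) (Hn : ~ principal u) : u (Iu lt u) -> u (Ju lt u) -> False.
Proof. try (pose proof Hl as [irr [trn tot]]). intros H1 H2. destruct (uf_ne2 Hu _ _ H1 H2) as [z [Hz1 Hz2]].
  exact (proj1 (Iu_Ju lt Hl u Hu Hn z) Hz2 Hz1). Qed.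

Lemma Lchar {X : Type} (lt : X -> X -> Prop) (Hl : linord lt) (u : (X -> Prop) -> Prop) (Hu : is_ultrafilter u) (Hn : ~ principal u) : forall x, u (fun y => lt x y) <-> Iu lt u x.
Proof. try (pose proof Hl as [irr [trn tot]]). intro x; split.
 - intro H. apply NNPP; intro HI. destruct (uf_ne2 Hu _ _ H (I3 lt Hl u Hu x HI)) as [y [H1 H2]]. first [exact (irr _ (trn _ _ _ H1 H2)) | exact (irr _ (trn _ _ _ H2 H1))].
 - apply (I2 lt Hl u Hu Hn). Qed.

Lemma L'char {X : Type} (lt : X -> X -> Prop) (u : (X -> Prop) -> Prop) (Hu : is_ultrafilter u) (Hn : ~ principal u) : forall x, u (fun y => le lt x y) <-> u (fun y => lt x y).
Proof. try (pose proof Hl as [irr [trn tot]]). intro x; split.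
 - intro H. eapply uf_mono; [exact Hu|exact (uf_and Hu _ _ H (nonpr_ne x Hu Hn))|].
   intros y [[?|?] ?]; auto. congruence.
 - intro H. eapply uf_mono; eauto. intros y Hy; left; auto. Qed.

Lemma CJ {X : Type} (lt : X -> X -> Prop) (Hl : linord lt) (u : (X -> Prop) -> Prop) (Hu : is_ultrafilter u) (Hn : ~ principal u) : u (Ju lt u) -> forall A, initial_segment lt A ->
  (u A <-> exists z, A z /\ Ju lt u z).
Proof. try (pose proof Hl as [irr [trn tot]]). intros HJ A HA; split.
 - intro H; exact (uf_ne2 Hu _ _ H HJ).
 - intros [z [Hz1 Hz2]]. eapply uf_mono; [exact Hu|exact (J2 lt Hl u Hu Hn z Hz2)|]. eauto. Qed.

Lemma Iu_init {X} (lt : X -> X -> Prop) u : initial_segment lt (Iu lt u).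
Proof. intros a b Hb Hab A HA HuA. exact (HA a b (Hb A HA HuA) Hab). Qed.
Lemma Ju_fin {X} (lt : X -> X -> Prop) u : final_segment lt (Ju lt u).
Proof. intros a b Hb Hab A HA HuA. exact (HA a b (Hb A HA HuA) Hab). Qed.

Lemma supp_cases {X} (lt : X -> X -> Prop) (Hl : linord lt) u (Hu : is_ultrafilter u) :
 (exists a, u = tilde a /\ supp lt u = Pt a) \/
 (~ principal u /\ u (Iu lt u) /\ supp lt u = LeftCut (Iu lt u)) \/
 (~ principal u /\ ~ u (Iu lt u) /\ u (Ju lt u) /\ supp lt u = RightCut (Ju lt u)).
Proof. unfold supp. destruct (excluded_middle_informative (principal u)) as [H|H].
 - left. destruct (constructive_indefinite_description _ H) as [a Ha]. simpl. eauto.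
 - right. destruct (excluded_middle_informative (u (Iu lt u))); [left|right]; auto.
   repeat split; auto. apply IJ; auto. Qed.

Lemma ext_np {X} (lt : X -> X -> Prop) (Hl : linord lt) u v
  (Hu : is_ultrafilter u) (Hv : is_ultrafilter v) (Hn : ~ principal v) :
  ext lt u v <-> u (Iu lt v).
Proof. unfold ext; split; intro H; eapply uf_mono; eauto; intros x Hx;
  apply (Lchar lt Hl v Hv Hn x); auto. Qed.

Lemma ext_le_np {X} (lt : X -> X -> Prop) u v
  (Hu : is_ultrafilter u) (Hv : is_ultrafilter v) (Hn : ~ principal v) :
  ext (le lt) u v <-> ext lt u v.
Proof. unfold ext; split; intro H; eapply uf_mono; eauto; intros x Hx;
  apply (L'char lt v Hv Hn x); auto. Qed.

Lemma main {X} (lt : X -> X -> Prop) (Hl : linord lt) u v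
  (Hu : is_ultrafilter u) (Hv : is_ultrafilter v) :
  (ext lt u v <->
     supp_lt lt (supp lt u) (supp lt v) \/
     (supp lt u = supp lt v /\ supp lt u = LeftCut (Iu lt u) /\
      supp lt v = LeftCut (Iu lt v) /\ Iu lt u = Iu lt v)) /\
  (ext (le lt) u v <->
     supp_lt lt (supp lt u) (supp lt v) \/
     (supp lt u = supp lt v /\ supp lt u = LeftCut (Iu lt u) /\
      supp lt v = LeftCut (Iu lt v) /\ Iu lt u = Iu lt v) \/
     (exists x : X, u = tilde x /\ v = tilde x)).
Proof.
  pose proof Hl as [irr [trn tot]].
  destruct (supp_cases lt Hl v Hv) as [[b [Eb Hsv]]|[[Hnv [HIv Hsv]]|[Hnv [HnIv [HJv Hsv]]]]].
  -
    subst v. rewrite Hsv.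
    assert (E1 : ext lt u (tilde b) = u (fun x => lt x b)) by reflexivity.
    assert (E2 : ext (le lt) u (tilde b) = u (fun x => le lt x b)) by reflexivity.
    rewrite E1, E2. clear E1 E2.
    destruct (supp_cases lt Hl u Hu) as [[a [Ea Hsu]]|[[Hnu [HIu Hsu]]|[Hnu [HnIu [HJu Hsu]]]]].
    + subst u. rewrite Hsu. unfold tilde; simpl. split; split.
      * intro H; left; exact H.
      * intros [H|(_&H&_)]; [exact H|discriminate].
      * intros [H|H]; [left; exact H|]. right; right; exists a; subst; auto.
      * intros [H|[(_&H&_)|[x [H1 H2]]]]; [left; exact H|discriminate|].
        right. apply tilde_inj in H1; apply tilde_inj in H2; congruence.
    + rewrite Hsu. simpl. split; split.
      * intros H; left; intros HI. apply (irr b). exact (HI (fun x => lt x b) (fun a c Hc Hac => trn _ _ _ Hac Hc) H).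
      * intros [H|(H&_)]; [|discriminate]. apply I3; auto.
      * intros H. left. intros HI.
        destruct (uf_ne2 Hu _ _ H (I2 lt Hl u Hu Hnu b HI)) as [y [[H1|H1] H2]].
        -- exact (irr _ (trn _ _ _ H1 H2)).
        -- subst; exact (irr _ H2).
      * intros [H|[(H&_)|[x [H1 H2]]]]; [|discriminate|].
        -- apply (uf_mono Hu (fun x => lt x b)); [apply (I3 lt Hl u Hu); auto|]. intros; left; auto.
        -- exfalso; apply Hnu; exists x; exact H1.
    + rewrite Hsu. simpl. split; split.
      * intros H. left. apply (CJ lt Hl u Hu Hnu HJu) in H as [z [Hz1 Hz2]].
        exact (Ju_fin lt u z b Hz2 Hz1).
        intros a c Hc Hac; eauto.
      * intros [H|(H&_)]; [|discriminate]. apply J2; auto.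
      * intros H. left. apply (CJ lt Hl u Hu Hnu HJu) in H as [z [[Hz1|Hz1] Hz2]].
        exact (Ju_fin lt u z b Hz2 Hz1). subst; auto.
        intros a c [Hc|Hc] Hac; left; [eauto|subst; auto].
      * intros [H|[(H&_)|[x [H1 H2]]]]; [|discriminate|].
        -- apply (uf_mono Hu (fun x => lt x b)); [apply (J2 lt Hl u Hu Hnu); auto|]. intros; left; auto.
        -- exfalso; apply Hnu; exists x; exact H1.
  -
    rewrite (ext_le_np lt u v Hu Hv Hnv), (ext_np lt Hl u v Hu Hv Hnv).
    assert (Hno : ~ (exists x : X, u = tilde x /\ v = tilde x))
      by (intros [x [_ H]]; apply Hnv; exists x; exact H).
    cut (u (Iu lt v) <->
     supp_lt lt (supp lt u) (supp lt v) \/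
     (supp lt u = supp lt v /\ supp lt u = LeftCut (Iu lt u) /\
      supp lt v = LeftCut (Iu lt v) /\ Iu lt u = Iu lt v)).
    { intro H; split; [exact H|]. rewrite H. tauto. }
    rewrite Hsv.
    destruct (supp_cases lt Hl u Hu) as [[a [Ea Hsu]]|[[Hnu [HIu Hsu]]|[Hnu [HnIu [HJu Hsu]]]]].
    + subst u. rewrite Hsu. unfold tilde; simpl. split; [tauto|].
      intros [H|(_&H&_)]; [exact H|discriminate].
    + rewrite Hsu. simpl. split.
      * intro H. destruct (classic (exists z, Iu lt v z /\ ~ Iu lt u z)) as [Hz|Hz].
        -- left. split; auto. intros z Hz'. exact (Hz' _ (Iu_init lt v) H).
        -- right. assert (E : Iu lt u = Iu lt v).
           { extensionality z; apply propositional_extensionality; split.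
             intros Hz'. exact (Hz' _ (Iu_init lt v) H).
             intros Hz'. apply NNPP; intro; apply Hz; eauto. }
           rewrite E; auto.
      * intros [[H _]|(_&_&_&E)].
        -- eapply uf_mono; eauto.
        -- rewrite <- E; auto.
    + rewrite Hsu. simpl. split.
      * intro H. left. apply (CJ lt Hl u Hu Hnu HJu) in H as [z [Hz1 Hz2]]; eauto.
        apply Iu_init.
      * intros [[z [Hz1 Hz2]]|(_&H&_)]; [|discriminate].
        apply (CJ lt Hl u Hu Hnu HJu); eauto. apply Iu_init.
  -
    rewrite (ext_le_np lt u v Hu Hv Hnv), (ext_np lt Hl u v Hu Hv Hnv).
    assert (Hno : ~ (exists x : X, u = tilde x /\ v = tilde x))
      by (intros [x [_ H]]; apply Hnv; exists x; exact H).
    cut (u (Iu lt v) <->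
     supp_lt lt (supp lt u) (supp lt v) \/
     (supp lt u = supp lt v /\ supp lt u = LeftCut (Iu lt u) /\
      supp lt v = LeftCut (Iu lt v) /\ Iu lt u = Iu lt v)).
    { intro H; split; [exact H|]. rewrite H. tauto. }
    rewrite Hsv.
    assert (HIJ := Iu_Ju lt Hl v Hv Hnv).
    destruct (supp_cases lt Hl u Hu) as [[a [Ea Hsu]]|[[Hnu [HIu Hsu]]|[Hnu [HnIu [HJu Hsu]]]]].
    + subst u. rewrite Hsu. unfold tilde; simpl. split.
      * intros H; left; intro HJ; exact (proj1 (HIJ a) HJ H).
      * intros [H|(_&H&_)]; [|discriminate]. apply NNPP; intro HI. apply H; apply (proj2 (HIJ a)); exact HI.
    + rewrite Hsu. simpl. split.
      * intros H; left. intros z [Hz1 Hz2]. exact (proj1 (HIJ z) Hz2 (Hz1 _ (Iu_init lt v) H)).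
      * intros [H|(_&_&H&_)]; [|discriminate]. eapply uf_mono; [exact Hu|exact HIu|].
        intros z Hz. apply NNPP; intro HI. apply (H z). split; auto. apply (proj2 (HIJ z)); exact HI.
    + rewrite Hsu. simpl. split.
      * intro H. left. apply (CJ lt Hl u Hu Hnu HJu) in H as [z [Hz1 Hz2]]; [|apply Iu_init].
        assert (Hz3 : ~ Ju lt v z) by (intro HJ; exact (proj1 (HIJ z) HJ Hz1)).
        split; [|eauto]. intros w Hw.
        destruct (tot w z) as [H|[H|H]].
        -- exfalso; apply Hz3; exact (Ju_fin lt v w z Hw H).
        -- subst; contradiction.
        -- exact (Ju_fin lt u z w Hz2 H).
      * intros [[_ [z [Hz1 Hz2]]]|(_&H&_)]; [|discriminate].
        apply (CJ lt Hl u Hu Hnu HJu); [apply Iu_init|]. exists z; split; auto.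
        apply NNPP; intro HI; apply Hz2; apply (proj2 (HIJ z)); exact HI.
Qed.

Definition swap {X} (s : support X) : support X :=
  match s with Pt x => Pt x | LeftCut K => RightCut K | RightCut J => LeftCut J end.
Lemma swap_inv {X} (s : support X) : swap (swap s) = s.
Proof. destruct s; reflexivity. Qed.

Lemma linord_flip {X} (lt : X -> X -> Prop) : linord lt -> linord (fun x y => lt y x).
Proof. intros [i [t o]]; split; [|split]; eauto. intros x y; destruct (o x y) as [?|[?|?]]; auto. Qed.

Lemma Iu_flip {X} (lt : X -> X -> Prop) u : Iu (fun x y => lt y x) u = Ju lt u.
Proof. extensionality x; apply propositional_extensionality; unfold Iu, Ju, initial_segment, final_segment.
  split; intros H A HA HuA; apply H; auto; intros a b Ha Hab; exact (HA b a Ha Hab). Qed.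
Lemma Ju_flip {X} (lt : X -> X -> Prop) u : Ju (fun x y => lt y x) u = Iu lt u.
Proof. extensionality x; apply propositional_extensionality; unfold Iu, Ju, initial_segment, final_segment.
  split; intros H A HA HuA; apply H; auto; intros a b Ha Hab; exact (HA b a Ha Hab). Qed.

Lemma supp_flip {X} (lt : X -> X -> Prop) (Hl : linord lt) u (Hu : is_ultrafilter u) :
  supp (fun x y => lt y x) u = swap (supp lt u).
Proof. unfold supp. destruct (excluded_middle_informative (principal u)) as [H|H]; [reflexivity|].
  rewrite (Iu_flip lt u), (Ju_flip lt u).
  destruct (excluded_middle_informative (u (Ju lt u))) as [A|A];
  destruct (excluded_middle_informative (u (Iu lt u))) as [B|B]; simpl; try reflexivity; exfalso.
  all: first [exact (IJ_excl lt Hl u Hu H B A) | exact (A (IJ lt Hl u Hu H B))].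
Qed.

Lemma supp_lt_swap {X} (lt : X -> X -> Prop) (s t : support X) :
  supp_lt (fun x y => lt y x) (swap s) (swap t) <-> supp_lt lt t s.
Proof. destruct s, t; simpl; firstorder. Qed.

Lemma translate {X} (lt : X -> X -> Prop) (Hl : linord lt) u v
  (Hu : is_ultrafilter u) (Hv : is_ultrafilter v) (P : Prop) :
  (P <-> supp_lt (fun x y => lt y x) (supp (fun x y => lt y x) u) (supp (fun x y => lt y x) v) \/
     (supp (fun x y => lt y x) u = supp (fun x y => lt y x) v /\
      supp (fun x y => lt y x) u = LeftCut (Iu (fun x y => lt y x) u) /\
      supp (fun x y => lt y x) v = LeftCut (Iu (fun x y => lt y x) v) /\
      Iu (fun x y => lt y x) u = Iu (fun x y => lt y x) v)) ->
  (P <-> supp_lt lt (supp lt v) (supp lt u) \/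
     (supp lt u = supp lt v /\ supp lt u = RightCut (Ju lt u) /\
      supp lt v = RightCut (Ju lt v) /\ Ju lt u = Ju lt v)).
Proof.
  rewrite (supp_flip lt Hl u Hu), (supp_flip lt Hl v Hv), (Iu_flip lt u), (Iu_flip lt v), supp_lt_swap.
  intro H; rewrite H; clear H.
  assert (E : forall (s : support X) K, swap s = LeftCut K <-> s = RightCut K).
  { intros s K; split; intro E; [apply (f_equal swap) in E; rewrite swap_inv in E; exact E|subst; reflexivity]. }
  assert (E2 : forall (s t : support X), swap s = swap t <-> s = t).
  { intros s t; split; intro E'; [apply (f_equal swap) in E'; rewrite !swap_inv in E'; exact E'|subst; reflexivity]. }
  rewrite !E, E2. tauto.
Qed.

Lemma ge_flip {X} (lt : X -> X -> Prop) : ge lt = le (fun x y => lt y x).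
Proof. extensionality x; extensionality y; apply propositional_extensionality.
  unfold ge, le; split; intros [H|H]; auto. Qed.

Theorem theorem1 (X : Type) (lt : X -> X -> Prop)
  (lt_irrefl : forall x, ~ lt x x)
  (lt_trans : forall x y z, lt x y -> lt y z -> lt x z)
  (lt_total : forall x y, lt x y \/ x = y \/ lt y x)
  (u v : (X -> Prop) -> Prop)
  (Hu : is_ultrafilter u) (Hv : is_ultrafilter v) :
  (ext lt u v <->
     supp_lt lt (supp lt u) (supp lt v) \/
     (supp lt u = supp lt v /\ supp lt u = LeftCut (Iu lt u) /\
      supp lt v = LeftCut (Iu lt v) /\ Iu lt u = Iu lt v)) /\
  (ext (le lt) u v <->
     supp_lt lt (supp lt u) (supp lt v) \/
     (supp lt u = supp lt v /\ supp lt u = LeftCut (Iu lt u) /\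
      supp lt v = LeftCut (Iu lt v) /\ Iu lt u = Iu lt v) \/
     (exists x : X, u = tilde x /\ v = tilde x)) /\
  (ext (gt lt) u v <->
     supp_lt lt (supp lt v) (supp lt u) \/
     (supp lt u = supp lt v /\ supp lt u = RightCut (Ju lt u) /\
      supp lt v = RightCut (Ju lt v) /\ Ju lt u = Ju lt v)) /\
  (ext (ge lt) u v <->
     supp_lt lt (supp lt v) (supp lt u) \/
     (supp lt u = supp lt v /\ supp lt u = RightCut (Ju lt u) /\
      supp lt v = RightCut (Ju lt v) /\ Ju lt u = Ju lt v) \/
     (exists x : X, u = tilde x /\ v = tilde x)) /\
  (~ principal u -> ~ principal v ->
     (ext lt u v <-> ext (le lt) u v) /\ (ext (gt lt) u v <-> ext (ge lt) u v)).
Proof.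
  assert (Hl : linord lt) by (split; [|split]; assumption).
  assert (Hl' := linord_flip lt Hl).
  destruct (main lt Hl u v Hu Hv) as [M1 M2].
  destruct (main _ Hl' u v Hu Hv) as [M3 M4].
  split; [exact M1|]. split; [exact M2|].
  split; [exact (translate lt Hl u v Hu Hv _ M3)|].
  split.
  - rewrite ge_flip.
    assert (H4 : ext (le (fun x y => lt y x)) u v <->
      (ext (fun x y => lt y x) u v \/ (exists x : X, u = tilde x /\ v = tilde x))).
    { rewrite M4, M3. tauto. }
    rewrite H4, (translate lt Hl u v Hu Hv _ M3). tauto.
  - intros _ Hnv. split.
    + symmetry; exact (ext_le_np lt u v Hu Hv Hnv).
    + rewrite ge_flip. symmetry; exact (ext_le_np _ u v Hu Hv Hnv).
Qed.
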